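(* Let $\mathbf r(x,y)$ be a membrane O surface of the 2nd kind with load $q_n\neq0$, represented in curvature line coordinates as $A_1 = \cos\alpha + h\sin\alpha$, $A_2 = \sin\alpha - h\cos\alpha$, $H_\circ = e^\xi\sin\alpha$, $K_\circ = -e^\xi\cos\alpha$, with $\overline A_1,\overline A_2$ determined by $2\overline A_1H_\circ - q_nA_1^2 = -q_n$, $2\overline A_2K_\circ - q_nA_2^2 = -q_n$, where $(h,\alpha,\xi)$ satisfy the system $$h_x = (h+\cot\alpha)\xi_x,\ \ h_y = (h-\tan\alpha)\xi_y,\ \ \xi_{xy} = \xi_x\xi_y + (\log\sin\alpha)_y\xi_x + (\log\cos\alpha)_x\xi_y,$$ $$(-\alpha_x+\xi_x\cot\alpha)_x + (\alpha_y+\xi_y\tan\alpha)_y + e^{2\xi}\sin\alpha\cos\alpha = 0. \quad (\ast\ast)$$ Let $m\neq0$ be a real constant and $(\lambda,\mu,\omega,\varphi,\chi)$ a solution of the linear system in the context satisfying the constraint $\lambda^2+\mu^2+\omega^2 = 2m\omega\nu$ with $\nu = \chi - \frac{q_n\varphi^2}{2\omega}$, and let $\mathbf r'$, $A_1',A_2',H_\circ',K_\circ'$ be as defined in the context. Put $t = h - \frac{\varphi}{\omega}e^{\xi}$ and define $\xi',\alpha',h'$ by $$e^{\xi'} = \frac{q_n}{2}\frac{\omega}{\nu}e^{-\xi}(1+t^2),\qquad e^{i\alpha'} = e^{i\alpha}\frac{1-it}{1+it},\qquad h' = -t + \frac{\varphi}{\omega}e^{\xi'}.$$ Then $$A_1'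 = \cos\alpha' + h'\sin\alpha',\quad A_2' = \sin\alpha' - h'\cos\alpha',\quad H_\circ' = e^{\xi'}\sin\alpha',\quad K_\circ' = -e^{\xi'}\cos\alpha'.$$ Consequently $(\xi',\alpha',h')$ again satisfies the system $(\ast\ast)$, i.e. the Bäcklund transformation preserves membrane O surfaces of the 2nd kind.
   Context: Setting: $\mathbf r(x,y)$ is a surface in $\mathbb R^3$ in curvature line coordinates with $\mathbf r_x = A_1\mathbf X$, $\mathbf r_y = A_2\mathbf Y$, $\mathbf X,\mathbf Y$ orthonormal, $\mathbf N = \mathbf X\times\mathbf Y$, $\mathbf N_x = H_\circ\mathbf X$, $\mathbf N_y = K_\circ\mathbf Y$ ($H_\circ = -\kappa_1A_1$, $K_\circ=-\kappa_2A_2$ with principal curvatures $\kappa_1,\kappa_2$), so $\mathrm I = A_1^2dx^2 + A_2^2dy^2$, $\mathrm{III} = H_\circ^2dx^2+K_\circ^2dy^2$; $p = (A_1)_y/A_2$, $q=(A_2)_x/A_1$. It is the middle surface of a shell membrane under constant purely normal load $q_n\neq 0$ whose principal stress lines coincide with curvature lines, with stress resultants $T_1,T_2$ satisfying $(T_1)_x + (\log A_1)_x(T_1-T_2)=0$, $(T_2)_y+(\log A_2)_y(T_2-T_1)=0$, $\kappa_1T_1+\kappa_2T_2+q_n=0$ (a membrane O surface); $\overline A_1 = T_2A_1$, $\overline A_2 = T_1A_2$. It is of the 2nd kind when $2\overline A_1H_\circ - q_nA_1^2 = -q_n$ and $2\overline A_2K_\circ - q_nA_2^2 = -q_n$. Linear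 system (with parameter $m$), for the column $\Psi = (\lambda,\mu,\omega,\varphi,\chi)^T$: $$\Psi_x = \begin{pmatrix}0&-p&m\overline A_1 - H_\circ & -mq_nA_1 & mH_\circ\\ p&0&0&0&0\\ H_\circ&0&0&0&0\\ A_1&0&0&0&0\\ \overline A_1&0&0&0&0\end{pmatrix}\Psi,\qquad \Psi_y = \begin{pmatrix}0&q&0&0&0\\ -q&0&m\overline A_2 - K_\circ & -mq_nA_2 & mK_\circ\\ 0&K_\circ&0&0&0\\ 0&A_2&0&0&0\\ 0&\overline A_2&0&0&0\end{pmatrix}\Psi.$$ Bäcklund transformation: $\mathbf r' = \mathbf r - \frac{\varphi}{m\omega\nu}(\lambda\mathbf X + \mu\mathbf Y + \omega\mathbf N)$ (with $\omega,\nu\neq0$). Set $H = m\big(\nu H_\circ + \omega\overline A_1 - q_n\varphi A_1 + \tfrac{q_n\varphi^2}{2\omega}H_\circ\big)$, $K = m\big(\nu K_\circ + \omega\overline A_2 - q_n\varphi A_2 + \tfrac{q_n\varphi^2}{2\omega}K_\circ\big)$, and $A_1' = A_1 - \frac{H\varphi}{m\omega\nu}$, $A_2' = A_2 - \frac{K\varphi}{m\omega\nu}$, $H_\circ' = H_\circ - \frac{H}{m\nu}$, $K_\circ' = K_\circ - \frac{K}{m\nu}$. It is known (Rogers–Schief) that $\mathbf r'$ is again a membrane O surface in the curvature line coordinates $(x,y)$ whose first and third fundamental forms have coefficients $A_1',A_2'$ and $H_\circ',K_\circ'$, i.e. $\mathrm I' = A_1'^2dx^2 + A_2'^2dy^2$,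 $\mathrm{III}' = H_\circ'^2dx^2 + K_\circ'^2dy^2$. *)

(* Defs.v *)
From Coquelicot Require Import Coquelicot.
From Stdlib Require Import Reals List.
Open Scope R_scope.

Definition dx (f : R -> R -> R) : R -> R -> R := fun x y => Derive (fun s => f s y) x.
Definition dy (f : R -> R -> R) : R -> R -> R := fun x y => Derive (fun s => f x s) y.

Fixpoint iterD (w : list bool) (f : R -> R -> R) : R -> R -> R :=
  match w with
  | nil => f
  | true :: w' => dx (iterD w' f)
  | false :: w' => dy (iterD w' f)
  end.

Definition open2 (U : R -> R -> Prop) : Prop :=
  forall x y, U x y -> exists eps : posreal, forall x' y',
    Rabs (x' - x) < eps -> Rabs (y' - y) < eps -> U x' y'.

Definition smooth_on (U : R -> R -> Prop) (f : R -> R -> R) : Prop :=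
  forall (w : list bool) x y, U x y ->
    ex_derive (fun s => iterD w f s y) x /\
    ex_derive (fun s => iterD w f x s) y /\
    continuity_2d_pt (iterD w f) x y.

Definition cis (a : R) : Complex.C := (cos a, sin a).

Definition A1f (h al : R -> R -> R) : R -> R -> R := fun x y => cos (al x y) + h x y * sin (al x y).
Definition A2f (h al : R -> R -> R) : R -> R -> R := fun x y => sin (al x y) - h x y * cos (al x y).
Definition H0f (al xi : R -> R -> R) : R -> R -> R := fun x y => exp (xi x y) * sin (al x y).
Definition K0f (al xi : R -> R -> R) : R -> R -> R := fun x y => - exp (xi x y) * cos (al x y).

(* the system (**) at every point of U;
   (log sin al)_y is written as cot(al) al_y and (log cos al)_x as -tan(al) al_x *)
Definition OSystem (U : R -> R -> Prop) (h al xi : R -> R -> R) : Prop :=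
  forall x y, U x y ->
    dx h x y = (h x y + cos (al x y) / sin (al x y)) * dx xi x y /\
    dy h x y = (h x y - sin (al x y) / cos (al x y)) * dy xi x y /\
    dy (dx xi) x y = dx xi x y * dy xi x y
                     + (cos (al x y) / sin (al x y) * dy al x y) * dx xi x y
                     + (- (sin (al x y) / cos (al x y)) * dx al x y) * dy xi x y /\
    dx (fun u v => - dx al u v + dx xi u v * (cos (al u v) / sin (al u v))) x y
    + dy (fun u v => dy al u v + dy xi u v * (sin (al u v) / cos (al u v))) x y
    + exp (2 * xi x y) * sin (al x y) * cos (al x y) = 0.

Definition nuf (qn : R) (om ph chi : R -> R -> R) : R -> R -> R :=
  fun x y => chi x y - qn * (ph x y) ^ 2 / (2 * om x y).

Definition tf (h xi om ph : R -> R -> R) : R -> R -> R :=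
  fun x y => h x y - ph x y / om x y * exp (xi x y).

Definition hprime (h xi om ph xi' : R -> R -> R) : R -> R -> R :=
  fun x y => - tf h xi om ph x y + ph x y / om x y * exp (xi' x y).

(* Main.v *)
Require Import Defs.
From Coquelicot Require Import Coquelicot.
From Stdlib Require Import Reals List Lra Psatz.
Open Scope R_scope.

Lemma smx U f u v : smooth_on U f -> U u v -> ex_derive (fun s => f s v) u.
Proof. intros H Hu; exact (proj1 (H nil u v Hu)). Qed.
Lemma smy U f u v : smooth_on U f -> U u v -> ex_derive (fun s => f u s) v.
Proof. intros H Hu; exact (proj1 (proj2 (H nil u v Hu))). Qed.
Lemma smxx U f u v : smooth_on U f -> U u v -> ex_derive (fun s => dx f s v) u.
Proof. intros H Hu; exact (proj1 (H (true::nil) u v Hu)). Qed.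
Lemma smxy U f u v : smooth_on U f -> U u v -> ex_derive (fun s => dx f u s) v.
Proof. intros H Hu; exact (proj1 (proj2 (H (true::nil) u v Hu))). Qed.
Lemma smyx U f u v : smooth_on U f -> U u v -> ex_derive (fun s => dy f s v) u.
Proof. intros H Hu; exact (proj1 (H (false::nil) u v Hu)). Qed.
Lemma smyy U f u v : smooth_on U f -> U u v -> ex_derive (fun s => dy f u s) v.
Proof. intros H Hu; exact (proj1 (proj2 (H (false::nil) u v Hu))). Qed.

Lemma near_x U u v : open2 U -> U u v -> locally u (fun s => U s v).
Proof.
intros HU Hu. destruct (HU u v Hu) as [eps He]. exists eps. intros s Hs.
apply He. exact Hs. rewrite Rminus_diag, Rabs_R0. apply cond_pos.
Qed.
Lemma near_y U u v : open2 U -> U u v -> locally v (fun s => U u s).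
Proof.
intros HU Hu. destruct (HU u v Hu) as [eps He]. exists eps. intros s Hs.
apply He. rewrite Rminus_diag, Rabs_R0. apply cond_pos. exact Hs.
Qed.

Lemma loc_x U (f g : R -> R -> R) u v : open2 U -> U u v ->
  (forall a b, U a b -> f a b = g a b) -> Derive (fun s => f s v) u = Derive (fun s => g s v) u.
Proof.
intros HU Hu Hfg. apply Derive_ext_loc. generalize (near_x U u v HU Hu).
apply filter_imp. intros s Hs. apply Hfg, Hs.
Qed.
Lemma loc_y U (f g : R -> R -> R) u v : open2 U -> U u v ->
  (forall a b, U a b -> f a b = g a b) -> Derive (fun s => f u s) v = Derive (fun s => g u s) v.
Proof.
intros HU Hu Hfg. apply Derive_ext_loc. generalize (near_y U u v HU Hu).
apply filter_imp. intros s Hs. apply Hfg, Hs.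
Qed.

Lemma cis_parts a b t : cis a = (cis b * ((1 - Ci * RtoC t) / (1 + Ci * RtoC t)))%C ->
  cos a = (cos b * (1 - t^2) + 2 * t * sin b) / (1 + t^2) /\
  sin a = (sin b * (1 - t^2) - 2 * t * cos b) / (1 + t^2).
Proof.
intros H. assert (Ht : 1 + t^2 <> 0) by (apply Rgt_not_eq; nra).
pose proof (f_equal fst H) as H1. pose proof (f_equal snd H) as H2.
unfold cis, Cdiv, Cmult, Cinv, Cminus, Cplus, Copp, Ci, RtoC in H1, H2; simpl in H1, H2.
split; [rewrite H1 | rewrite H2]; field; nra.
Qed.

Lemma cos_2atan t : cos (2 * atan t) = (1 - t^2) / (1 + t^2).
Proof.
rewrite cos_2a, cos_atan, sin_atan, Rsqr_pow2.
assert (Hs : 0 < sqrt (1 + t^2)) by (apply sqrt_lt_R0; nra).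
assert (Hs2 : sqrt (1 + t^2) * sqrt (1 + t^2) = 1 + t^2) by (apply sqrt_sqrt; nra).
set (q := sqrt (1 + t^2)) in *. rewrite <- Hs2. field. lra.
Qed.
Lemma sin_2atan t : sin (2 * atan t) = 2 * t / (1 + t^2).
Proof.
rewrite sin_2a, cos_atan, sin_atan, Rsqr_pow2.
assert (Hs : 0 < sqrt (1 + t^2)) by (apply sqrt_lt_R0; nra).
assert (Hs2 : sqrt (1 + t^2) * sqrt (1 + t^2) = 1 + t^2) by (apply sqrt_sqrt; nra).
set (q := sqrt (1 + t^2)) in *. rewrite <- Hs2. field. lra.
Qed.

Definition Setting U qn m (h al xi Ab1 Ab2 lam mu om ph chi : R -> R -> R) : Prop :=
  open2 U /\ qn <> 0 /\ m <> 0 /\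
  smooth_on U h /\ smooth_on U al /\ smooth_on U xi /\
  smooth_on U lam /\ smooth_on U mu /\ smooth_on U om /\
  smooth_on U ph /\ smooth_on U chi /\
  (forall x y, U x y -> sin (al x y) <> 0 /\ cos (al x y) <> 0) /\
  (forall x y, U x y -> A1f h al x y <> 0 /\ A2f h al x y <> 0) /\
  OSystem U h al xi /\
  (forall x y, U x y ->
     2 * Ab1 x y * H0f al xi x y - qn * (A1f h al x y) ^ 2 = - qn /\
     2 * Ab2 x y * K0f al xi x y - qn * (A2f h al x y) ^ 2 = - qn) /\
  (let A1 := A1f h al in let A2 := A2f h al in
   let H0 := H0f al xi in let K0 := K0f al xi in
   let p := fun x y => dy A1 x y / A2 x y in
   let q := fun x y => dx A2 x y / A1 x y in
   forall x y, U x y ->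
     dx lam x y = - p x y * mu x y + (m * Ab1 x y - H0 x y) * om x y
                  - m * qn * A1 x y * ph x y + m * H0 x y * chi x y /\
     dx mu x y = p x y * lam x y /\
     dx om x y = H0 x y * lam x y /\
     dx ph x y = A1 x y * lam x y /\
     dx chi x y = Ab1 x y * lam x y /\
     dy lam x y = q x y * mu x y /\
     dy mu x y = - q x y * lam x y + (m * Ab2 x y - K0 x y) * om x y
                 - m * qn * A2 x y * ph x y + m * K0 x y * chi x y /\
     dy om x y = K0 x y * mu x y /\
     dy ph x y = A2 x y * mu x y /\
     dy chi x y = Ab2 x y * mu x y) /\
  (forall x y, U x y -> om x y <> 0 /\ nuf qn om ph chi x y <> 0) /\
  (forall x y, U x y ->
     (lam x y) ^ 2 + (mu x y) ^ 2 + (om x y) ^ 2 = 2 * m * om x y * nuf qn om ph chi x y).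

Ltac unpack HS :=
  destruct HS as (HU & Hqn & Hm & Sh & Sal & Sxi & Slam & Smu & Som & Sph & Schi &
                  Htrig & HA & HO & H2k & HL & Hon & Hcon).

Ltac exd := repeat match goal with
  | |- _ /\ _ => split
  | |- True => exact I
  | H : smooth_on ?U ?f, Hu : ?U ?u ?v |- ex_derive (fun s => ?f s ?v) ?u => exact (smx U f u v H Hu)
  | H : smooth_on ?U ?f, Hu : ?U ?u ?v |- ex_derive (fun s => ?f ?u s) ?v => exact (smy U f u v H Hu)
  end.


Definition Sa (al : R -> R -> R) u v := sin (al u v).
Definition Txf (h al xi om ph lam : R -> R -> R) u v :=
  (tf h xi om ph u v + cos (al u v) / sin (al u v)) * dx xi u v
  - lam u v * exp (xi u v) * (cos (al u v) + tf h xi om ph u v * sin (al u v)) / om u v.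
Definition Tyf (h al xi om ph mu : R -> R -> R) u v :=
  (tf h xi om ph u v - sin (al u v) / cos (al u v)) * dy xi u v
  - mu u v * exp (xi u v) * (sin (al u v) - tf h xi om ph u v * cos (al u v)) / om u v.
Definition Nxf qn (h al xi om ph lam : R -> R -> R) u v :=
  qn * lam u v * (2 * tf h xi om ph u v * cos (al u v) + (tf h xi om ph u v)^2 * sin (al u v)
                  - sin (al u v)) / (2 * exp (xi u v)).
Definition Nyf qn (h al xi om ph mu : R -> R -> R) u v :=
  qn * mu u v * (cos (al u v) + 2 * tf h xi om ph u v * sin (al u v)
                  - (tf h xi om ph u v)^2 * cos (al u v)) / (2 * exp (xi u v)).
Definition Lxf qn m (h al xi om ph chi lam mu : R -> R -> R) u v :=
  m * (om u v * qn * (2 * tf h xi om ph u v * cos (al u v) + (tf h xi om ph u v)^2 * sin (al u v)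
                  - sin (al u v)) / (2 * exp (xi u v)) + exp (xi u v) * sin (al u v) * nuf qn om ph chi u v)
  - exp (xi u v) * sin (al u v) * om u v
  - (- dy xi u v * sin (al u v) / cos (al u v) - dy al u v) * mu u v.
Definition Myf qn m (h al xi om ph chi lam mu : R -> R -> R) u v :=
  - (dx al u v - dx xi u v * cos (al u v) / sin (al u v)) * lam u v
  + m * (om u v * qn * (cos (al u v) + 2 * tf h xi om ph u v * sin (al u v)
                  - (tf h xi om ph u v)^2 * cos (al u v)) / (2 * exp (xi u v))
         - exp (xi u v) * cos (al u v) * nuf qn om ph chi u v)
  + exp (xi u v) * cos (al u v) * om u v.

Lemma base_pt U qn m h al xi Ab1 Ab2 lam mu om ph chi u v :
  Setting U qn m h al xi Ab1 Ab2 lam mu om ph chi -> U u v ->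
  Derive (fun s => h s v) u = (h u v + cos (al u v) / sin (al u v)) * dx xi u v /\
  Derive (fun s => h u s) v = (h u v - sin (al u v) / cos (al u v)) * dy xi u v /\
  Derive (fun s => om s v) u = exp (xi u v) * sin (al u v) * lam u v /\
  Derive (fun s => om u s) v = - exp (xi u v) * cos (al u v) * mu u v /\
  Derive (fun s => ph s v) u = (cos (al u v) + h u v * sin (al u v)) * lam u v /\
  Derive (fun s => ph u s) v = (sin (al u v) - h u v * cos (al u v)) * mu u v /\
  Derive (fun s => chi s v) u = qn * ((cos (al u v) + h u v * sin (al u v))^2 - 1)
                                 / (2 * (exp (xi u v) * sin (al u v))) * lam u v /\
  Derive (fun s => chi u s) v = qn * ((sin (al u v) - h u v * cos (al u v))^2 - 1)
                                 / (2 * (- exp (xi u v) * cos (al u v))) * mu u v /\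
  Derive (fun s => lam s v) u = Lxf qn m h al xi om ph chi lam mu u v /\
  Derive (fun s => lam u s) v = (dx al u v - dx xi u v * cos (al u v) / sin (al u v)) * mu u v /\
  Derive (fun s => mu s v) u = (- dy xi u v * sin (al u v) / cos (al u v) - dy al u v) * lam u v /\
  Derive (fun s => mu u s) v = Myf qn m h al xi om ph chi lam mu u v.
Proof.
intros HS Hu. pose proof HS as HS'. unpack HS.
destruct (Htrig u v Hu) as [HS0 Hc0]. destruct (HA u v Hu) as [HA1 HA2].
destruct (HO u v Hu) as (Ohx & Ohy & _ & _).
destruct (H2k u v Hu) as [K1 K2].
destruct (Hon u v Hu) as [Hom Hnu].
destruct (HL u v Hu) as (Llx & Lmx & Lox & Lpx & Lcx & Lly & Lmy & Loy & Lpy & Lcy).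
assert (HE : exp (xi u v) <> 0) by (apply Rgt_not_eq, exp_pos).
assert (Hsc : cos (al u v) ^ 2 = 1 - sin (al u v) ^ 2) by (pose proof (sin2_cos2 (al u v)); unfold Rsqr in *; lra).
assert (EA1 : Ab1 u v = qn * ((cos (al u v) + h u v * sin (al u v))^2 - 1)
                                 / (2 * (exp (xi u v) * sin (al u v)))).
{ unfold H0f, A1f in K1. field_simplify_eq; [|auto]. lra. }
assert (EA2 : Ab2 u v = qn * ((sin (al u v) - h u v * cos (al u v))^2 - 1)
                                 / (2 * (- exp (xi u v) * cos (al u v)))).
{ unfold K0f, A2f in K2. field_simplify_eq; [|auto]. lra. }
assert (Dy1 : dy (A1f h al) u v = - sin (al u v) * dy al u v + dy h u v * sin (al u v)
                                  + h u v * (cos (al u v) * dy al u v)).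
{ unfold dy, A1f. apply is_derive_unique. auto_derive. exd. ring. }
assert (Dx2 : dx (A2f h al) u v = cos (al u v) * dx al u v - (dx h u v * cos (al u v)
                                  + h u v * (- sin (al u v) * dx al u v))).
{ unfold dx, A2f. apply is_derive_unique. auto_derive. exd. ring. }
assert (Ep : dy (A1f h al) u v / A2f h al u v = - dy xi u v * sin (al u v) / cos (al u v) - dy al u v).
{ rewrite Dy1, Ohy. unfold A2f in *. field. auto. }
assert (Eq : dx (A2f h al) u v / A1f h al u v = dx al u v - dx xi u v * cos (al u v) / sin (al u v)).
{ rewrite Dx2, Ohx. unfold A1f in *. field. auto. }
change (Derive (fun s => h s v) u) with (dx h u v).
change (Derive (fun s => h u s) v) with (dy h u v).
change (Derive (fun s => om s v) u) with (dx om u v).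
change (Derive (fun s => om u s) v) with (dy om u v).
change (Derive (fun s => ph s v) u) with (dx ph u v).
change (Derive (fun s => ph u s) v) with (dy ph u v).
change (Derive (fun s => chi s v) u) with (dx chi u v).
change (Derive (fun s => chi u s) v) with (dy chi u v).
change (Derive (fun s => lam s v) u) with (dx lam u v).
change (Derive (fun s => lam u s) v) with (dy lam u v).
change (Derive (fun s => mu s v) u) with (dx mu u v).
change (Derive (fun s => mu u s) v) with (dy mu u v).
rewrite Llx, Lmx, Lox, Lpx, Lcx, Lly, Lmy, Loy, Lpy, Lcy, Ohx, Ohy.
cbv beta. rewrite Ep, Eq, EA1, EA2.
unfold H0f, K0f, A1f, A2f, Lxf, Myf, tf, nuf.
repeat split; try (field; auto); field [Hsc]; auto.
Qed.

Lemma tnu_pt U qn m h al xi Ab1 Ab2 lam mu om ph chi u v :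
  Setting U qn m h al xi Ab1 Ab2 lam mu om ph chi -> U u v ->
  is_derive (fun s => tf h xi om ph s v) u (Txf h al xi om ph lam u v) /\
  is_derive (fun s => tf h xi om ph u s) v (Tyf h al xi om ph mu u v) /\
  is_derive (fun s => nuf qn om ph chi s v) u (Nxf qn h al xi om ph lam u v) /\
  is_derive (fun s => nuf qn om ph chi u s) v (Nyf qn h al xi om ph mu u v).
Proof.
intros HS Hu. pose proof (base_pt _ _ _ _ _ _ _ _ _ _ _ _ _ u v HS Hu) as
  (Dhx & Dhy & Dox & Doy & Dpx & Dpy & Dcx & Dcy & Dlx & Dly & Dmx & Dmy).
unpack HS.
destruct (Htrig u v Hu) as [HS0 Hc0].
destruct (Hon u v Hu) as [Hom Hnu].
assert (HE : exp (xi u v) <> 0) by (apply Rgt_not_eq, exp_pos).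
assert (Hsc : cos (al u v) ^ 2 = 1 - sin (al u v) ^ 2) by (pose proof (sin2_cos2 (al u v)); unfold Rsqr in *; lra).
unfold tf, nuf, Txf, Tyf, Nxf, Nyf, tf, dx, dy.
refine (conj _ (conj _ (conj _ _))); (auto_derive; [exd; auto|]);
  rewrite ?Dhx, ?Dhy, ?Dox, ?Doy, ?Dpx, ?Dpy, ?Dcx, ?Dcy; unfold dx, dy; field [Hsc]; auto.
Qed.

Lemma sin_small_zero d : Rabs d < PI -> sin d = 0 -> d = 0.
Proof.
intros Hd Hs. destruct (Rtotal_order d 0) as [Hn|[Hz|Hp]]; auto.
- rewrite Rabs_left in Hd by lra. pose proof (sin_gt_0 (-d) ltac:(lra) ltac:(lra)).
  rewrite sin_neg in H. lra.
- rewrite Rabs_right in Hd by lra. pose proof (sin_gt_0 d ltac:(lra) ltac:(lra)). lra.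
Qed.

Lemma loc_const (f g : R -> R) a :
  continuous g a ->
  (forall eps : posreal, locally a (fun s => Rabs (f s - f a) < eps)) ->
  locally a (fun s => cos (f s) = cos (g s) /\ sin (f s) = sin (g s)) ->
  locally a (fun s => f s = g s + (f a - g a)).
Proof.
intros Hg Hf Hcs.
assert (Hpi : 0 < PI / 2) by (pose proof PI_RGT_0; lra).
pose proof (Hg _ (locally_ball (g a) (mkposreal _ Hpi))) as Hg1.
pose proof (Hf (mkposreal _ Hpi)) as Hf1.
pose proof (locally_singleton _ _ Hcs) as [Ca Sa].
unfold filtermap in Hg1.
generalize (filter_and _ _ Hg1 (filter_and _ _ Hf1 Hcs)).
apply filter_imp. intros s (Hb & Hfs & Cs & Ss).
unfold ball in Hb; simpl in Hb; unfold AbsRing_ball, abs, minus, plus, opp in Hb; simpl in Hb.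
simpl in Hfs.
set (d := (f s - g s) - (f a - g a)).
assert (Hd : Rabs d < PI).
{ unfold d. replace ((f s - g s) - (f a - g a)) with ((f s - f a) + - (g s + - g a)) by ring.
  eapply Rle_lt_trans. apply Rabs_triang. rewrite Rabs_Ropp. lra. }
assert (Hsd : sin d = 0).
{ unfold d. rewrite sin_minus, !sin_minus, !cos_minus, Ca, Sa, Cs, Ss. ring. }
pose proof (sin_small_zero d Hd Hsd). unfold d in H. lra.
Qed.

Definition PSet U qn (h al xi om ph chi xi' al' : R -> R -> R) : Prop :=
  (forall x y, U x y ->
     exp (xi' x y) = qn / 2 * (om x y / nuf qn om ph chi x y) * exp (- xi x y)
                     * (1 + (tf h xi om ph x y) ^ 2)) /\
  (forall x y, U x y ->
     cis (al' x y) = (cis (al x y) * ((1 - Ci * RtoC (tf h xi om ph x y))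
                                      / (1 + Ci * RtoC (tf h xi om ph x y))))%C) /\
  (forall x y, U x y -> continuity_2d_pt al' x y).

Definition CAf (h al xi om ph : R -> R -> R) u v :=
  (cos (al u v) * (1 - (tf h xi om ph u v)^2) + 2 * tf h xi om ph u v * sin (al u v))
  / (1 + (tf h xi om ph u v)^2).
Definition SAf (h al xi om ph : R -> R -> R) u v :=
  (sin (al u v) * (1 - (tf h xi om ph u v)^2) - 2 * tf h xi om ph u v * cos (al u v))
  / (1 + (tf h xi om ph u v)^2).
Definition EXf qn (h xi om ph chi : R -> R -> R) u v :=
  qn / 2 * (om u v / nuf qn om ph chi u v) * exp (- xi u v) * (1 + (tf h xi om ph u v) ^ 2).
Definition XIxf qn (h al xi om ph chi lam : R -> R -> R) u v :=
  exp (xi u v) * sin (al u v) * lam u v / om u v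
  - Nxf qn h al xi om ph lam u v / nuf qn om ph chi u v - dx xi u v
  + 2 * tf h xi om ph u v * Txf h al xi om ph lam u v / (1 + (tf h xi om ph u v)^2).
Definition XIyf qn (h al xi om ph chi mu : R -> R -> R) u v :=
  - exp (xi u v) * cos (al u v) * mu u v / om u v
  - Nyf qn h al xi om ph mu u v / nuf qn om ph chi u v - dy xi u v
  + 2 * tf h xi om ph u v * Tyf h al xi om ph mu u v / (1 + (tf h xi om ph u v)^2).
Definition ALxf (h al xi om ph lam : R -> R -> R) u v :=
  dx al u v - 2 * Txf h al xi om ph lam u v / (1 + (tf h xi om ph u v)^2).
Definition ALyf (h al xi om ph mu : R -> R -> R) u v :=
  dy al u v - 2 * Tyf h al xi om ph mu u v / (1 + (tf h xi om ph u v)^2).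

Lemma trig_new U qn h al xi om ph chi xi' al' u v :
  PSet U qn h al xi om ph chi xi' al' -> U u v ->
  cos (al' u v) = CAf h al xi om ph u v /\ sin (al' u v) = SAf h al xi om ph u v /\
  cos (al u v - 2 * atan (tf h xi om ph u v)) = CAf h al xi om ph u v /\
  sin (al u v - 2 * atan (tf h xi om ph u v)) = SAf h al xi om ph u v.
Proof.
intros (_ & Hc & _) Hu. destruct (cis_parts _ _ _ (Hc u v Hu)) as [C1 S1].
unfold CAf, SAf. rewrite C1, S1, cos_minus, sin_minus, cos_2atan, sin_2atan.
set (t := tf h xi om ph u v).
assert (1 + t^2 <> 0) by (apply Rgt_not_eq; nra).
repeat split; field; auto.
Qed.

Ltac exd2 := repeat match goal with
  | |- _ /\ _ => split
  | |- True => exact I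
  | H : smooth_on ?U ?f, Hu : ?U ?u ?v |- ex_derive (fun s => ?f s ?v) ?u => exact (smx U f u v H Hu)
  | H : smooth_on ?U ?f, Hu : ?U ?u ?v |- ex_derive (fun s => ?f ?u s) ?v => exact (smy U f u v H Hu)
  | H : smooth_on ?U ?f, Hu : ?U ?u ?v |- ex_derive (fun s => dx ?f s ?v) ?u => exact (smxx U f u v H Hu)
  | H : smooth_on ?U ?f, Hu : ?U ?u ?v |- ex_derive (fun s => dx ?f ?u s) ?v => exact (smxy U f u v H Hu)
  | H : smooth_on ?U ?f, Hu : ?U ?u ?v |- ex_derive (fun s => dy ?f s ?v) ?u => exact (smyx U f u v H Hu)
  | H : smooth_on ?U ?f, Hu : ?U ?u ?v |- ex_derive (fun s => dy ?f ?u s) ?v => exact (smyy U f u v H Hu)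
  | |- ex_derive _ _ => solve [eexists; eassumption]
  end.

Ltac toR := match goal with |- ?a = ?b => change (@eq R a b) end.
Ltac fsc := repeat split; auto; try (apply Rgt_not_eq, exp_pos).

Lemma new_pt U qn m h al xi Ab1 Ab2 lam mu om ph chi xi' al' u v :
  Setting U qn m h al xi Ab1 Ab2 lam mu om ph chi ->
  PSet U qn h al xi om ph chi xi' al' -> U u v ->
  is_derive (fun s => xi' s v) u (XIxf qn h al xi om ph chi lam u v) /\
  is_derive (fun s => xi' u s) v (XIyf qn h al xi om ph chi mu u v) /\
  is_derive (fun s => al' s v) u (ALxf h al xi om ph lam u v) /\
  is_derive (fun s => al' u s) v (ALyf h al xi om ph mu u v).
Proof.
intros HS HP Hu.
destruct (tnu_pt _ _ _ _ _ _ _ _ _ _ _ _ _ u v HS Hu) as (Tx & Ty & Nx & Ny).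
assert (DTx : Derive (fun s : R => tf h xi om ph s v) u = Txf h al xi om ph lam u v) by (apply is_derive_unique; exact Tx).
assert (DTy : Derive (fun s : R => tf h xi om ph u s) v = Tyf h al xi om ph mu u v) by (apply is_derive_unique; exact Ty).
assert (DNx : Derive (fun s : R => nuf qn om ph chi s v) u = Nxf qn h al xi om ph lam u v) by (apply is_derive_unique; exact Nx).
assert (DNy : Derive (fun s : R => nuf qn om ph chi u s) v = Nyf qn h al xi om ph mu u v) by (apply is_derive_unique; exact Ny).
pose proof (base_pt _ _ _ _ _ _ _ _ _ _ _ _ _ u v HS Hu) as
  (Dhx & Dhy & Dox & Doy & Dpx & Dpy & Dcx & Dcy & Dlx & Dly & Dmx & Dmy).
pose proof HS as HS'. unpack HS.
destruct (Htrig u v Hu) as [HS0 Hc0].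
destruct (Hon u v Hu) as [Hom Hnu].
assert (HE : exp (xi u v) <> 0) by (apply Rgt_not_eq, exp_pos).
assert (Ht : 1 + (tf h xi om ph u v)^2 <> 0) by (apply Rgt_not_eq; nra).
destruct HP as (Hx & Hc & Hct).
assert (Hln : forall a b, U a b -> xi' a b = ln (EXf qn h xi om ph chi a b)).
{ intros a b Hab. unfold EXf. rewrite <- Hx by exact Hab. rewrite ln_exp. reflexivity. }
assert (Hpos : 0 < EXf qn h xi om ph chi u v) by (unfold EXf; rewrite <- Hx by exact Hu; apply exp_pos).
refine (conj _ (conj _ (conj _ _))).
- apply is_derive_ext_loc with (f := fun s => ln (EXf qn h xi om ph chi s v)).
  { generalize (near_x U u v HU Hu). apply filter_imp. intros s Hs. symmetry. apply Hln, Hs. }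
  unfold EXf in *. auto_derive.
  { exd2; auto. }
  rewrite DTx, DNx, Dox. unfold XIxf, dx. field; fsc.
- apply is_derive_ext_loc with (f := fun s => ln (EXf qn h xi om ph chi u s)).
  { generalize (near_y U u v HU Hu). apply filter_imp. intros s Hs. symmetry. apply Hln, Hs. }
  unfold EXf in *. auto_derive.
  { exd2; auto. }
  rewrite DTy, DNy, Doy. unfold XIyf, dy. field; fsc.
- set (g := fun s => al s v - 2 * atan (tf h xi om ph s v)).
  apply is_derive_ext_loc with (f := fun s => g s + (al' u v - g u)).
  { assert (Hl := loc_const (fun s => al' s v) g u).
    assert (Hgc : continuous g u).
    { apply (@ex_derive_continuous R_AbsRing R_NormedModule). unfold g. auto_derive. exd2. }
    specialize (Hl Hgc).
    assert (Hf : forall eps : posreal, locally u (fun s => Rabs (al' s v - al' u v) < eps)).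
    { intros eps. destruct (Hct u v Hu eps) as [d Hd]. exists d. intros s Hs. apply Hd.
      exact Hs. rewrite Rminus_diag, Rabs_R0. apply cond_pos. }
    specialize (Hl Hf).
    assert (Hcs : locally u (fun s => cos (al' s v) = cos (g s) /\ sin (al' s v) = sin (g s))).
    { generalize (near_x U u v HU Hu). apply filter_imp. intros s Hs.
      destruct (trig_new U qn h al xi om ph chi xi' al' s v (conj Hx (conj Hc Hct)) Hs) as (A & B & C & D).
      unfold g. rewrite A, B, C, D. auto. }
    specialize (Hl Hcs). generalize Hl. apply filter_imp. intros s Hs. simpl in Hs. rewrite Hs. reflexivity. }
  unfold g. auto_derive.
  { exd2. }
  rewrite DTx. unfold ALxf, dx. field; fsc.
- set (g := fun s => al u s - 2 * atan (tf h xi om ph u s)).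
  apply is_derive_ext_loc with (f := fun s => g s + (al' u v - g v)).
  { assert (Hl := loc_const (fun s => al' u s) g v).
    assert (Hgc : continuous g v).
    { apply (@ex_derive_continuous R_AbsRing R_NormedModule). unfold g. auto_derive. exd2. }
    specialize (Hl Hgc).
    assert (Hf : forall eps : posreal, locally v (fun s => Rabs (al' u s - al' u v) < eps)).
    { intros eps. destruct (Hct u v Hu eps) as [d Hd]. exists d. intros s Hs. apply Hd.
      rewrite Rminus_diag, Rabs_R0. apply cond_pos. exact Hs. }
    specialize (Hl Hf).
    assert (Hcs : locally v (fun s => cos (al' u s) = cos (g s) /\ sin (al' u s) = sin (g s))).
    { generalize (near_y U u v HU Hu). apply filter_imp. intros s Hs.
      destruct (trig_new U qn h al xi om ph chi xi' al' u s (conj Hx (conj Hc Hct)) Hs) as (A & B & C & D).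
      unfold g. rewrite A, B, C, D. auto. }
    specialize (Hl Hcs). generalize Hl. apply filter_imp. intros s Hs. simpl in Hs. rewrite Hs. reflexivity. }
  unfold g. auto_derive.
  { exd2. }
  rewrite DTy. unfold ALyf, dy. field; fsc.
Qed.

Lemma Dnew_pt U qn m h al xi Ab1 Ab2 lam mu om ph chi xi' al' u v :
  Setting U qn m h al xi Ab1 Ab2 lam mu om ph chi ->
  PSet U qn h al xi om ph chi xi' al' -> U u v ->
  Derive (fun s : R => xi' s v) u = XIxf qn h al xi om ph chi lam u v /\
  Derive (fun s : R => xi' u s) v = XIyf qn h al xi om ph chi mu u v /\
  Derive (fun s : R => al' s v) u = ALxf h al xi om ph lam u v /\
  Derive (fun s : R => al' u s) v = ALyf h al xi om ph mu u v.
Proof.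
intros HS HP Hu. destruct (new_pt _ _ _ _ _ _ _ _ _ _ _ _ _ _ _ u v HS HP Hu) as (A&B&C&D).
repeat split; apply is_derive_unique; assumption.
Qed.

Lemma E12 U qn m h al xi Ab1 Ab2 lam mu om ph chi xi' al' u v :
  Setting U qn m h al xi Ab1 Ab2 lam mu om ph chi ->
  PSet U qn h al xi om ph chi xi' al' -> U u v -> sin (al' u v) <> 0 -> cos (al' u v) <> 0 ->
  dx (hprime h xi om ph xi') u v = (hprime h xi om ph xi' u v + cos (al' u v) / sin (al' u v)) * dx xi' u v /\
  dy (hprime h xi om ph xi') u v = (hprime h xi om ph xi' u v - sin (al' u v) / cos (al' u v)) * dy xi' u v.
Proof.
intros HS HP Hu HSa HCa.
destruct (new_pt _ _ _ _ _ _ _ _ _ _ _ _ _ _ _ u v HS HP Hu) as (Xx & Xy & Ax & Ay).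
destruct (Dnew_pt _ _ _ _ _ _ _ _ _ _ _ _ _ _ _ u v HS HP Hu) as (DXx & DXy & DAx & DAy).
destruct (tnu_pt _ _ _ _ _ _ _ _ _ _ _ _ _ u v HS Hu) as (Tx & Ty & Nx & Ny).
assert (DTx : Derive (fun s : R => tf h xi om ph s v) u = Txf h al xi om ph lam u v) by (apply is_derive_unique; exact Tx).
assert (DTy : Derive (fun s : R => tf h xi om ph u s) v = Tyf h al xi om ph mu u v) by (apply is_derive_unique; exact Ty).
pose proof (base_pt _ _ _ _ _ _ _ _ _ _ _ _ _ u v HS Hu) as
  (Dhx & Dhy & Dox & Doy & Dpx & Dpy & Dcx & Dcy & Dlx & Dly & Dmx & Dmy).
destruct (trig_new _ _ _ _ _ _ _ _ _ _ u v HP Hu) as (CA & SA & _ & _).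
pose proof HS as HS'. unpack HS.
destruct (Htrig u v Hu) as [HS0 Hc0].
destruct (Hon u v Hu) as [Hom Hnu].
assert (HE : exp (xi u v) <> 0) by (apply Rgt_not_eq, exp_pos).
assert (Ht : 1 + (tf h xi om ph u v)^2 <> 0) by (apply Rgt_not_eq; nra).
assert (Hsc : cos (al u v) ^ 2 = 1 - sin (al u v) ^ 2) by (pose proof (sin2_cos2 (al u v)); unfold Rsqr in *; lra).
destruct HP as (Hx & Hc & Hct).
assert (Hh : h u v = tf h xi om ph u v + ph u v / om u v * exp (xi u v)) by (unfold tf; field; auto).
assert (HSa' : SAf h al xi om ph u v <> 0) by (rewrite <- SA; auto).
assert (HCa' : CAf h al xi om ph u v <> 0) by (rewrite <- CA; auto).
assert (HSn : sin (al u v) * (1 - (tf h xi om ph u v)^2) - 2 * tf h xi om ph u v * cos (al u v) <> 0).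
{ intro Z; apply HSa'; unfold SAf; rewrite Z; unfold Rdiv; ring. }
assert (HCn : cos (al u v) * (1 - (tf h xi om ph u v)^2) + 2 * tf h xi om ph u v * sin (al u v) <> 0).
{ intro Z; apply HCa'; unfold CAf; rewrite Z; unfold Rdiv; ring. }
unfold hprime, dx, dy. split.
- apply is_derive_unique. auto_derive. { exd2; auto. }
  rewrite DTx, DXx, Dpx, Dox, Hx, CA, SA by exact Hu.
  unfold XIxf, Txf, Nxf, EXf, CAf, SAf in *. rewrite Hh, exp_Ropp. unfold dx. toR.
  field [Hsc]. fsc.
- apply is_derive_unique. auto_derive. { exd2; auto. }
  rewrite DTy, DXy, Dpy, Doy, Hx, CA, SA by exact Hu.
  unfold XIyf, Tyf, Nyf, EXf, CAf, SAf in *. rewrite Hh, exp_Ropp. unfold dy. toR.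
  field [Hsc]. fsc.
Qed.

Ltac prep_pt HS HP Hu u v :=
  destruct (new_pt _ _ _ _ _ _ _ _ _ _ _ _ _ _ _ u v HS HP Hu) as (Xx & Xy & Ax & Ay);
  destruct (Dnew_pt _ _ _ _ _ _ _ _ _ _ _ _ _ _ _ u v HS HP Hu) as (DXx & DXy & DAx & DAy);
  destruct (tnu_pt _ _ _ _ _ _ _ _ _ _ _ _ _ u v HS Hu) as (Tx & Ty & Nx & Ny);
  let DTx := fresh "DTx" in let DTy := fresh "DTy" in let DNx := fresh "DNx" in let DNy := fresh "DNy" in
  match type of Tx with is_derive _ _ ?l => assert (DTx : Derive (fun s : R => tf _ _ _ _ s v) u = l) by (apply is_derive_unique; exact Tx) end;
  match type of Ty with is_derive _ _ ?l => assert (DTy : Derive (fun s : R => tf _ _ _ _ u s) v = l) by (apply is_derive_unique; exact Ty) end;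
  match type of Nx with is_derive _ _ ?l => assert (DNx : Derive (fun s : R => nuf _ _ _ _ s v) u = l) by (apply is_derive_unique; exact Nx) end;
  match type of Ny with is_derive _ _ ?l => assert (DNy : Derive (fun s : R => nuf _ _ _ _ u s) v = l) by (apply is_derive_unique; exact Ny) end;
  pose proof (base_pt _ _ _ _ _ _ _ _ _ _ _ _ _ u v HS Hu) as
    (Dhx & Dhy & Dox & Doy & Dpx & Dpy & Dcx & Dcy & Dlx & Dly & Dmx & Dmy);
  destruct (trig_new _ _ _ _ _ _ _ _ _ _ u v HP Hu) as (CA & SA & _ & _).

Lemma E3 U qn m h al xi Ab1 Ab2 lam mu om ph chi xi' al' u v :
  Setting U qn m h al xi Ab1 Ab2 lam mu om ph chi ->
  PSet U qn h al xi om ph chi xi' al' -> U u v -> sin (al' u v) <> 0 -> cos (al' u v) <> 0 ->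
  dy (dx xi') u v = dx xi' u v * dy xi' u v
                     + (cos (al' u v) / sin (al' u v) * dy al' u v) * dx xi' u v
                     + (- (sin (al' u v) / cos (al' u v)) * dx al' u v) * dy xi' u v.
Proof.
intros HS HP Hu HSa HCa.
assert (HXx : forall a b, U a b -> dx xi' a b = XIxf qn h al xi om ph chi lam a b).
{ intros a b Hab. destruct (Dnew_pt _ _ _ _ _ _ _ _ _ _ _ _ _ _ _ a b HS HP Hab) as (A & _). exact A. }
prep_pt HS HP Hu u v.
pose proof HS as HS'. unpack HS.
destruct (Htrig u v Hu) as [HS0 Hc0].
destruct (Hon u v Hu) as [Hom Hnu].
assert (HE : exp (xi u v) <> 0) by (apply Rgt_not_eq, exp_pos).
assert (Ht : 1 + (tf h xi om ph u v)^2 <> 0) by (apply Rgt_not_eq; nra).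
assert (Hsc : cos (al u v) ^ 2 = 1 - sin (al u v) ^ 2) by (pose proof (sin2_cos2 (al u v)); unfold Rsqr in *; lra).
assert (HSa' : SAf h al xi om ph u v <> 0) by (rewrite <- SA; auto).
assert (HCa' : CAf h al xi om ph u v <> 0) by (rewrite <- CA; auto).
assert (HSn : sin (al u v) * (1 - (tf h xi om ph u v)^2) - 2 * tf h xi om ph u v * cos (al u v) <> 0).
{ intro Z; apply HSa'; unfold SAf; rewrite Z; unfold Rdiv; ring. }
assert (HCn : cos (al u v) * (1 - (tf h xi om ph u v)^2) + 2 * tf h xi om ph u v * sin (al u v) <> 0).
{ intro Z; apply HCa'; unfold CAf; rewrite Z; unfold Rdiv; ring. }
destruct (HO u v Hu) as (_ & _ & O3 & _).
assert (D3 : Derive (fun s : R => dx xi u s) v = dx xi u v * dy xi u v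
                     + (cos (al u v) / sin (al u v) * dy al u v) * dx xi u v
                     + (- (sin (al u v) / cos (al u v)) * dx al u v) * dy xi u v) by exact O3.
unfold dy at 1. rewrite (loc_y U _ _ u v HU Hu HXx).
unfold XIxf, Nxf, Txf.
apply is_derive_unique. auto_derive.
{ exd2; auto. }
rewrite D3, DTy, DNy, Dly, Doy.
change (dx xi' u v) with (Derive (fun s : R => xi' s v) u).
change (dy xi' u v) with (Derive (fun s : R => xi' u s) v).
change (dx al' u v) with (Derive (fun s : R => al' s v) u).
change (dy al' u v) with (Derive (fun s : R => al' u s) v).
rewrite DXx, DXy, DAx, DAy, CA, SA.
unfold XIxf, XIyf, Nxf, Nyf, Txf, Tyf, ALxf, ALyf, CAf, SAf. unfold dx, dy. toR.
unfold Txf, Tyf, dx, dy. field [Hsc]. fsc.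
Qed.

Lemma E4 U qn m h al xi Ab1 Ab2 lam mu om ph chi xi' al' u v :
  Setting U qn m h al xi Ab1 Ab2 lam mu om ph chi ->
  PSet U qn h al xi om ph chi xi' al' -> U u v -> sin (al' u v) <> 0 -> cos (al' u v) <> 0 ->
  dx (fun u v => - dx al' u v + dx xi' u v * (cos (al' u v) / sin (al' u v))) u v
    + dy (fun u v => dy al' u v + dy xi' u v * (sin (al' u v) / cos (al' u v))) u v
    + exp (2 * xi' u v) * sin (al' u v) * cos (al' u v) = 0.
Proof.
intros HS HP Hu HSa HCa.
assert (HFx : forall a b, U a b ->
   - dx al' a b + dx xi' a b * (cos (al' a b) / sin (al' a b)) =
   - ALxf h al xi om ph lam a b + XIxf qn h al xi om ph chi lam a b * (CAf h al xi om ph a b / SAf h al xi om ph a b)).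
{ intros a b Hab. destruct (Dnew_pt _ _ _ _ _ _ _ _ _ _ _ _ _ _ _ a b HS HP Hab) as (A & _ & C & _).
  destruct (trig_new _ _ _ _ _ _ _ _ _ _ a b HP Hab) as (CA & SA & _ & _).
  unfold dx. rewrite A, C, CA, SA. reflexivity. }
assert (HFy : forall a b, U a b ->
   dy al' a b + dy xi' a b * (sin (al' a b) / cos (al' a b)) =
   ALyf h al xi om ph mu a b + XIyf qn h al xi om ph chi mu a b * (SAf h al xi om ph a b / CAf h al xi om ph a b)).
{ intros a b Hab. destruct (Dnew_pt _ _ _ _ _ _ _ _ _ _ _ _ _ _ _ a b HS HP Hab) as (_ & B & _ & D).
  destruct (trig_new _ _ _ _ _ _ _ _ _ _ a b HP Hab) as (CA & SA & _ & _).
  unfold dy. rewrite B, D, CA, SA. reflexivity. }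
prep_pt HS HP Hu u v.
pose proof HS as HS'. unpack HS.
destruct (Htrig u v Hu) as [HS0 Hc0].
destruct (Hon u v Hu) as [Hom Hnu].
assert (HE : exp (xi u v) <> 0) by (apply Rgt_not_eq, exp_pos).
assert (Ht : 1 + (tf h xi om ph u v)^2 <> 0) by (apply Rgt_not_eq; nra).
assert (Hsc : cos (al u v) ^ 2 = 1 - sin (al u v) ^ 2) by (pose proof (sin2_cos2 (al u v)); unfold Rsqr in *; lra).
assert (HSa' : SAf h al xi om ph u v <> 0) by (rewrite <- SA; auto).
assert (HCa' : CAf h al xi om ph u v <> 0) by (rewrite <- CA; auto).
assert (HSn : sin (al u v) * (1 - (tf h xi om ph u v)^2) - 2 * tf h xi om ph u v * cos (al u v) <> 0).
{ intro Z; apply HSa'; unfold SAf; rewrite Z; unfold Rdiv; ring. }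
assert (HCn : cos (al u v) * (1 - (tf h xi om ph u v)^2) + 2 * tf h xi om ph u v * sin (al u v) <> 0).
{ intro Z; apply HCa'; unfold CAf; rewrite Z; unfold Rdiv; ring. }
destruct (HO u v Hu) as (_ & _ & _ & O4).
eassert (GX : is_derive (fun s : R => - dx al s v + dx xi s v * (cos (al s v) / sin (al s v))) u _).
{ auto_derive; [exd2; auto | reflexivity]. }
eassert (GY : is_derive (fun s : R => dy al u s + dy xi u s * (sin (al u s) / cos (al u s))) v _).
{ auto_derive; [exd2; auto | reflexivity]. }
unfold dx at 1 in O4. unfold dy at 1 in O4. cbv beta in O4.
rewrite (is_derive_unique _ _ _ GX), (is_derive_unique _ _ _ GY) in O4.
unfold dx at 1. unfold dy at 1. cbv beta.
rewrite (loc_x U _ _ u v HU Hu HFx), (loc_y U _ _ u v HU Hu HFy).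
destruct HP as (Hx & _ & _).
replace (2 * xi' u v) with (xi' u v + xi' u v) by ring. rewrite exp_plus, (Hx u v Hu), CA, SA.
unfold ALxf, ALyf, XIxf, XIyf, Nxf, Nyf, CAf, SAf.
match goal with |- ?A + ?B + ?C = 0 =>
  match type of O4 with ?L = 0 => apply (eq_trans (y := L)); [| exact O4] end end.
match goal with |- Derive ?f u + Derive ?g v + _ = _ =>
  eassert (DX : is_derive f u _); [unfold Txf; auto_derive; [exd2; auto | reflexivity] |];
  eassert (DY : is_derive g v _); [unfold Tyf; auto_derive; [exd2; auto | reflexivity] |]
end.
rewrite (is_derive_unique _ _ _ DX), (is_derive_unique _ _ _ DY).
rewrite DTx, DNx, Dlx, Dox, DTy, DNy, Dmy, Doy.
replace (2 * xi u v) with (xi u v + xi u v) by ring. rewrite exp_plus, exp_Ropp.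
unfold Txf, Tyf, Lxf, Myf, Nxf, Nyf. unfold dx, dy. toR.
assert (HN : nuf qn om ph chi u v = (lam u v ^ 2 + mu u v ^ 2 + om u v ^ 2) / (2 * m * om u v)) by (rewrite (Hcon u v Hu); field; auto). assert (HN0 : lam u v ^ 2 + mu u v ^ 2 + om u v ^ 2 <> 0) by (rewrite (Hcon u v Hu); repeat apply Rmult_integral_contrapositive_currified; auto; lra). rewrite HN. field [Hsc].
repeat split; auto; try (intro Z; apply HCn; rewrite <- Z; ring); try (intro Z; apply HSn; rewrite <- Z; ring).
Qed.

Lemma pt1 U qn m h al xi Ab1 Ab2 lam mu om ph chi xi' al' :
  Setting U qn m h al xi Ab1 Ab2 lam mu om ph chi ->
  PSet U qn h al xi om ph chi xi' al' ->
  let A1 := A1f h al in let A2 := A2f h al in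
  let H0 := H0f al xi in let K0 := K0f al xi in
  let nu := nuf qn om ph chi in
  let HH := fun x y => m * (nu x y * H0 x y + om x y * Ab1 x y - qn * ph x y * A1 x y
                            + qn * (ph x y) ^ 2 / (2 * om x y) * H0 x y) in
  let KK := fun x y => m * (nu x y * K0 x y + om x y * Ab2 x y - qn * ph x y * A2 x y
                            + qn * (ph x y) ^ 2 / (2 * om x y) * K0 x y) in
  let A1' := fun x y => A1 x y - HH x y * ph x y / (m * om x y * nu x y) in
  let A2' := fun x y => A2 x y - KK x y * ph x y / (m * om x y * nu x y) in
  let H0' := fun x y => H0 x y - HH x y / (m * nu x y) in
  let K0' := fun x y => K0 x y - KK x y / (m * nu x y) in
  let h' := hprime h xi om ph xi' in
  (forall x y, U x y ->
     A1' x y = cos (al' x y) + h' x y * sin (al' x y) /\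
     A2' x y = sin (al' x y) - h' x y * cos (al' x y) /\
     H0' x y = exp (xi' x y) * sin (al' x y) /\
     K0' x y = - exp (xi' x y) * cos (al' x y)).
Proof.
intros HS HP. cbv zeta. intros u v Hu.
destruct (trig_new _ _ _ _ _ _ _ _ _ _ u v HP Hu) as (CA & SA & _ & _).
destruct HP as (Hx & _ & _).
unpack HS.
destruct (Htrig u v Hu) as [HS0 Hc0].
destruct (Hon u v Hu) as [Hom Hnu].
destruct (H2k u v Hu) as [K1 K2].
assert (HE : exp (xi u v) <> 0) by (apply Rgt_not_eq, exp_pos).
assert (Ht : 1 + (tf h xi om ph u v)^2 <> 0) by (apply Rgt_not_eq; nra).
assert (Hsc : cos (al u v) ^ 2 = 1 - sin (al u v) ^ 2) by (pose proof (sin2_cos2 (al u v)); unfold Rsqr in *; lra).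
assert (EA1 : Ab1 u v = qn * ((cos (al u v) + h u v * sin (al u v))^2 - 1)
                                 / (2 * (exp (xi u v) * sin (al u v)))).
{ unfold H0f, A1f in K1. field_simplify_eq; [|auto]. lra. }
assert (EA2 : Ab2 u v = qn * ((sin (al u v) - h u v * cos (al u v))^2 - 1)
                                 / (2 * (- exp (xi u v) * cos (al u v)))).
{ unfold K0f, A2f in K2. field_simplify_eq; [|auto]. lra. }
unfold hprime. rewrite CA, SA, (Hx u v Hu), EA1, EA2.
assert (Hh : h u v = tf h xi om ph u v + ph u v / om u v * exp (xi u v)) by (unfold tf; field; auto).
unfold CAf, SAf, A1f, A2f, H0f, K0f. rewrite exp_Ropp, Hh.
repeat split; field [Hsc]; fsc.
Qed.

Theorem mainTheorem4
  (U : R -> R -> Prop) (qn m : R)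
  (h al xi Ab1 Ab2 lam mu om ph chi xi' al' : R -> R -> R) :
  open2 U ->
  qn <> 0 -> m <> 0 ->
  smooth_on U h -> smooth_on U al -> smooth_on U xi ->
  smooth_on U lam -> smooth_on U mu -> smooth_on U om ->
  smooth_on U ph -> smooth_on U chi ->
  (forall x y, U x y -> sin (al x y) <> 0 /\ cos (al x y) <> 0) ->
  (forall x y, U x y -> A1f h al x y <> 0 /\ A2f h al x y <> 0) ->
  (* (h, alpha, xi) solves (**) *)
  OSystem U h al xi ->
  (* 2nd kind: Abar_1, Abar_2 determined by the algebraic relations *)
  (forall x y, U x y ->
     2 * Ab1 x y * H0f al xi x y - qn * (A1f h al x y) ^ 2 = - qn /\
     2 * Ab2 x y * K0f al xi x y - qn * (A2f h al x y) ^ 2 = - qn) ->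
  (* the linear system, with p = (A1)_y / A2 and q = (A2)_x / A1 *)
  (let A1 := A1f h al in let A2 := A2f h al in
   let H0 := H0f al xi in let K0 := K0f al xi in
   let p := fun x y => dy A1 x y / A2 x y in
   let q := fun x y => dx A2 x y / A1 x y in
   forall x y, U x y ->
     dx lam x y = - p x y * mu x y + (m * Ab1 x y - H0 x y) * om x y
                  - m * qn * A1 x y * ph x y + m * H0 x y * chi x y /\
     dx mu x y = p x y * lam x y /\
     dx om x y = H0 x y * lam x y /\
     dx ph x y = A1 x y * lam x y /\
     dx chi x y = Ab1 x y * lam x y /\
     dy lam x y = q x y * mu x y /\
     dy mu x y = - q x y * lam x y + (m * Ab2 x y - K0 x y) * om x y
                 - m * qn * A2 x y * ph x y + m * K0 x y * chi x y /\
     dy om x y = K0 x y * mu x y /\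
     dy ph x y = A2 x y * mu x y /\
     dy chi x y = Ab2 x y * mu x y) ->
  (forall x y, U x y -> om x y <> 0 /\ nuf qn om ph chi x y <> 0) ->
  (* the constraint *)
  (forall x y, U x y ->
     (lam x y) ^ 2 + (mu x y) ^ 2 + (om x y) ^ 2 = 2 * m * om x y * nuf qn om ph chi x y) ->
  (* definition of xi' and alpha' (alpha' a continuous choice of the angle) *)
  (forall x y, U x y ->
     exp (xi' x y) = qn / 2 * (om x y / nuf qn om ph chi x y) * exp (- xi x y)
                     * (1 + (tf h xi om ph x y) ^ 2)) ->
  (forall x y, U x y ->
     cis (al' x y) = (cis (al x y) * ((1 - Ci * RtoC (tf h xi om ph x y))
                                      / (1 + Ci * RtoC (tf h xi om ph x y))))%C) ->
  (forall x y, U x y -> continuity_2d_pt al' x y) ->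
  let A1 := A1f h al in let A2 := A2f h al in
  let H0 := H0f al xi in let K0 := K0f al xi in
  let nu := nuf qn om ph chi in
  let HH := fun x y => m * (nu x y * H0 x y + om x y * Ab1 x y - qn * ph x y * A1 x y
                            + qn * (ph x y) ^ 2 / (2 * om x y) * H0 x y) in
  let KK := fun x y => m * (nu x y * K0 x y + om x y * Ab2 x y - qn * ph x y * A2 x y
                            + qn * (ph x y) ^ 2 / (2 * om x y) * K0 x y) in
  let A1' := fun x y => A1 x y - HH x y * ph x y / (m * om x y * nu x y) in
  let A2' := fun x y => A2 x y - KK x y * ph x y / (m * om x y * nu x y) in
  let H0' := fun x y => H0 x y - HH x y / (m * nu x y) in
  let K0' := fun x y => K0 x y - KK x y / (m * nu x y) in
  let h' := hprime h xi om ph xi' in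
  (forall x y, U x y ->
     A1' x y = cos (al' x y) + h' x y * sin (al' x y) /\
     A2' x y = sin (al' x y) - h' x y * cos (al' x y) /\
     H0' x y = exp (xi' x y) * sin (al' x y) /\
     K0' x y = - exp (xi' x y) * cos (al' x y)) /\
  OSystem (fun x y => U x y /\ sin (al' x y) <> 0 /\ cos (al' x y) <> 0) h' al' xi'.
Proof.
intros HU Hqn Hm Sh Sal Sxi Slam Smu Som Sph Schi Htrig HA HO H2k HL Hon Hcon Hx Hc Hct.
assert (HS : Setting U qn m h al xi Ab1 Ab2 lam mu om ph chi).
{ unfold Setting. repeat (split; [assumption|]). assumption. }
assert (HP : PSet U qn h al xi om ph chi xi' al').
{ unfold PSet. split; [assumption|split; assumption]. }
pose proof (pt1 U qn m h al xi Ab1 Ab2 lam mu om ph chi xi' al' HS HP) as P1.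
cbv zeta in P1 |- *. split.
- exact P1.
- intros x y [Hxy [HSa HCa]].
  destruct (E12 U qn m h al xi Ab1 Ab2 lam mu om ph chi xi' al' x y HS HP Hxy HSa HCa) as [E1 E2].
  refine (conj E1 (conj E2 (conj _ _))).
  + exact (E3 U qn m h al xi Ab1 Ab2 lam mu om ph chi xi' al' x y HS HP Hxy HSa HCa).
  + exact (E4 U qn m h al xi Ab1 Ab2 lam mu om ph chi xi' al' x y HS HP Hxy HSa HCa).
Qed.
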